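(* Let $I,S$ be numerical semigroups such that $I$ is irreducible, $S\subseteq I$ and $\mathrm{F}(S)=\mathrm{F}(I)$. Then $S=I\setminus A$ for some $A\subseteq\{x\in I\mid \frac{\mathrm{F}(I)}{2}<x<\mathrm{F}(I)\}$ if and only if $\Delta(S)=\Delta(I)$.
   Context: A numerical semigroup is a subset $S\subseteq\mathbb{N}$ closed under addition with $0\in S$ and $\mathbb{N}\setminus S$ finite; $\mathrm{F}(S)=\max(\mathbb{Z}\setminus S)$. A numerical semigroup is irreducible if it is not the intersection of two numerical semigroups properly containing it. $\Delta(S)=\{s\in S\mid s<\frac{\mathrm{F}(S)}{2}\}$. *)

(* Defs.v *)
From Stdlib Require Import ZArith.
Open Scope Z_scope.

Definition numerical_semigroup (S : nat -> Prop) : Prop :=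
  S 0%nat /\
  (forall a b, S a -> S b -> S (a + b)%nat) /\
  (exists N : nat, forall n : nat, (N <= n)%nat -> S n).

Definition inZ (S : nat -> Prop) (z : Z) : Prop := 0 <= z /\ S (Z.to_nat z).

Definition frobenius (S : nat -> Prop) (f : Z) : Prop :=
  ~ inZ S f /\ forall z : Z, f < z -> inZ S z.

Definition subset (S T : nat -> Prop) : Prop := forall x, S x -> T x.
Definition proper_subset (S T : nat -> Prop) : Prop :=
  subset S T /\ exists x, T x /\ ~ S x.

Definition irreducible (S : nat -> Prop) : Prop :=
  numerical_semigroup S /\
  ~ (exists T1 T2 : nat -> Prop,
        numerical_semigroup T1 /\ numerical_semigroup T2 /\
        proper_subset S T1 /\ proper_subset S T2 /\
        (forall x, S x <-> (T1 x /\ T2 x))).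

Definition Delta (S : nat -> Prop) (f : Z) (s : nat) : Prop :=
  S s /\ 2 * Z.of_nat s < f.

(* Main.v *)
Require Import Defs.
From Stdlib Require Import ZArith Lia Classical.
Open Scope Z_scope.

Theorem proposition25 (I S : nat -> Prop) (f : Z) :
  numerical_semigroup I -> numerical_semigroup S ->
  irreducible I -> subset S I ->
  frobenius I f -> frobenius S f ->
  ((exists A : nat -> Prop,
       (forall x, A x -> I x /\ f < 2 * Z.of_nat x /\ Z.of_nat x < f) /\
       (forall x, S x <-> (I x /\ ~ A x)))
   <-> (forall s, Delta S f s <-> Delta I f s)).
Proof.
  intros HI HS _ Hsub [FI1 FI2] [FS1 FS2]. split.
  - intros [A [HA HSA]] s. unfold Delta. split.
    + intros [Hs Hlt]. split; [apply Hsub; exact Hs| exact Hlt].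
    + intros [Hs Hlt]. split; [|exact Hlt]. apply HSA. split; [exact Hs|].
      intros HAs. destruct (HA s HAs) as [_ [H1 _]]. lia.
  - intros HD. exists (fun x => I x /\ ~ S x). split.
    + intros x [Ix NSx]. split; [exact Ix|]. split.
      * destruct (Z.lt_trichotomy f (2 * Z.of_nat x)) as [H|[H|H]]; [exact H| |].
        -- exfalso. apply FI1. destruct HI as [_ [Hadd _]].
           split; [lia|]. replace (Z.to_nat f) with (x + x)%nat by lia.
           apply Hadd; exact Ix.
        -- exfalso. apply NSx. apply (proj2 (HD x)). split; [exact Ix|lia].
      * destruct (Z.lt_trichotomy (Z.of_nat x) f) as [H|[H|H]]; [exact H| |].
        -- exfalso. apply FI1. split; [lia|]. rewrite <- H, Nat2Z.id. exact Ix.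
        -- exfalso. apply NSx. destruct (FS2 _ H) as [_ Hx].
           rewrite Nat2Z.id in Hx. exact Hx.
    + intros x. split.
      * intros Sx. split; [apply Hsub; exact Sx|]. tauto.
      * intros [Ix Hn]. apply NNPP. intro NSx. apply Hn. tauto.
Qed.
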